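(* Let $D$ be a reduced knot diagram with $n$ vertices. Consider the original $2$-color region select game on $D$, i.e. $k=2$ with all increment numbers equal to $1$. Fix a checkerboard shading of $D$. Then the following hold. (i) Every color configuration has a unique solving pattern in which a given shaded region and a given unshaded region are not pushed. (ii) Let $S$ be a set of $i$ regions containing at least one shaded and at least one unshaded region. Then exactly $2^{n+2-i}$ color configurations have a solving pattern that does not push any region of $S$. (iii) Let $S$ be a set of $i\ge1$ regions that are all shaded, or all unshaded. Then exactly $2^{n+1-i}$ color configurations have a solving pattern that does not push any region of $S$.
   Context: Diagrams: a link (knot) diagram $D$ is the underlying graph of a regular projection of a link (knot) into $S^2$. Its vertices are the crossings, each of valence 4, and over/under information is ignored. Components without crossings are closed loops, each regarded as one edge with no vertices. Regions of $D$ are the connected components of $S^2\setminus D$. A vertex or edge is incident to a region if it lies in the boundary of that region. Two regions are adjacent if they are incident to a common edge. A vertex $v$ is reducible if some circle in $S^2$ meets $D$ transversely only at $v$, and irreducible otherwise. An irreducible vertex is incident to four distinct regions. A reducible vertex $v$ is incident to exactly three regions $r_0,r_1,r_2$, where $r_0$ touches $v$ from two sides and $r_1,r_2$ touch it from one side. A knot diagram with $n$ vertices has $n+2$ regions. A knot diagram is reduced if all its vertices are irreducible. Ring: for an integer $k\ge2$ let $\mathbb{Z}_k=\mathbb{Z}/k\mathbb{Z}$, and for $k=\infty$ let $\mathbb{Z}_\infty=\mathbb{Z}$. Game versions: a version of the $k$-color region select game on $D$ is a choice of an increment number $a(v,r)\in\mathbb{Z}_k$ for every incident vertex–region pair, subject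 to the following rules. - If $k<\infty$ and $v$ is irreducible, then $a(v,r)=a_v$ is the same for all regions $r$ incident to $v$, and $a_v$ is not a zero divisor of $\mathbb{Z}_k$. - If $k<\infty$ and $v$ is reducible, then $a(v,r_0)$ is arbitrary, while $a(v,r_1)$ and $a(v,r_2)$ are not zero divisors. - If $k=\infty$, then $a(v,r)=1$, except that $a(v,r_0)\in\mathbb{Z}$ is arbitrary when $v$ is reducible. - The original game is the version in which all increment numbers equal $1$. Game matrix: enumerate the vertices as $v_1,\dots,v_n$ and the regions as $r_1,\dots,r_m$. The game matrix is the $n\times m$ matrix $M$ over $\mathbb{Z}_k$ with $M_{ij}=a(v_i,r_j)$ if $v_i$ is incident to $r_j$, and $M_{ij}=0$ otherwise. Patterns and configurations: a push pattern is a vector $\mathbf p\in\mathbb{Z}_k^m$, and $\mathbf p(r_j)=p_j$ is the number of times $r_j$ is pushed. A region $r$ is not pushed in $\mathbf p$ if $\mathbf p(r)=0$. A color configuration is a vector $\mathbf c\in\mathbb{Z}_k^n$. Applying $\mathbf p$ to $\mathbf c$ yields $\mathbf c+M\mathbf p$. The configuration $\mathbf c$ is solvable if some $\mathbf p$ satisfies $M\mathbf p=-\mathbf c$; such a $\mathbf p$ is a solving pattern for $\mathbf c$. $D$ is always solvable in the version if every $\mathbf c\in\mathbb{Z}_k^n$ is solvable. A null pattern is an element of $Ker_k(M)=\{\mathbf p\in\mathbb{Z}_k^m: M\mathbf p=0\}$. Checkerboard shading: a checkerboard shading of $D$ is a shading of some of its regions such that, of any two adjacent regions, exactly one is shaded.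 *)

(* Defs.v *)
From HB Require Import structures.
From mathcomp Require Import all_boot all_order all_fingroup all_algebra.
Set Implicit Arguments. Unset Strict Implicit. Unset Printing Implicit Defensive.
Import GRing.Theory.
Local Open Scope ring_scope.

(* A link diagram with at least one crossing, encoded as a combinatorial map
   (the underlying 4-valent plane graph).  Darts are half-edges; [vrot] is the
   cyclic (counterclockwise) rotation of the darts around their vertex, and
   [einv] exchanges the two ends of an edge. *)
Record diagram := Diagram {
  dart : finType;
  vrot : {perm dart};
  einv : {perm dart} }.

Section DiagramDefs.
Variable D : diagram.

(* face permutation: traverse an edge, then turn at the next vertex *)
Definition fphi (d : dart D) : dart D := vrot D (einv D d).
(* straight-ahead continuation of a strand through a crossing *)
Definition straight (d : dart D) : dart D := vrot D (vrot D (einv D d)).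
Definition vrotf (d : dart D) : dart D := vrot D d.

Definition vertices : {set {set dart D}} :=
  [set [set e | fconnect vrotf d e] | d : dart D].
Definition faces : {set {set dart D}} :=
  [set [set e | fconnect fphi d e] | d : dart D].
Definition strands : {set {set dart D}} :=
  [set [set e | fconnect straight d e] | d : dart D].

Local Notation vertex := {A : {set dart D} | A \in vertices}.
Local Notation region := {A : {set dart D} | A \in faces}.

(* D is (the underlying graph of) a knot diagram in S^2 with >= 1 crossing:
   a connected map, every vertex of valence 4, of genus 0 (Euler's formula),
   whose straight-ahead walks form a single closed curve (each component
   gives two orbits of darts, one per direction). *)
Definition knot_diagram : Prop :=
  [/\ (forall d : dart D, einv D (einv D d) = d /\ einv D d != d),
      forall d : dart D, fingraph.order vrotf d = 4%N,
      forall d e : dart D,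
        connect (fun x y => (y == vrot D x) || (y == einv D x)) d e,
      (#|vertices| + #|faces| = (#|dart D|)./2 + 2)%N
    & #|strands| = 2%N].

Definition incident (v : vertex) (r : region) : bool :=
  [exists d, (d \in val v) && (d \in val r)].

(* irreducible vertex: its four corners lie in four distinct regions *)
Definition irreducible_vertex (v : vertex) : Prop :=
  forall d e : dart D, d \in val v -> e \in val v ->
    fconnect fphi d e -> d = e.
Definition reduced : Prop := forall v : vertex, irreducible_vertex v.

Definition adjacent (r r' : region) : Prop :=
  exists2 d : dart D, d \in val r & einv D d \in val r'.
Definition checkerboard (sh : {set region}) : Prop :=
  forall r r' : region, adjacent r r' -> (r \in sh) != (r' \in sh).

(* original game with k = 2: all increment numbers equal 1;
   game_apply p = M p for the game matrix M *)
Definition game_apply (p : {ffun region -> 'Z_2}) : {ffun vertex -> 'Z_2} :=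
  [ffun v => \sum_(r : region) (if incident v r then 1 else 0) * p r].
Definition solving (c : {ffun vertex -> 'Z_2}) (p : {ffun region -> 'Z_2}) : bool :=
  game_apply p == - c.
End DiagramDefs.

Notation vertex D := {A : {set dart D} | A \in vertices D}.
Notation region D := {A : {set dart D} | A \in faces D}.

(* Main.v *)
Require Import Defs.
From HB Require Import structures.
From mathcomp Require Import all_boot all_order all_fingroup all_algebra zify.
Set Implicit Arguments. Unset Strict Implicit. Unset Printing Implicit Defensive.
Import GRing.Theory.
Local Open Scope ring_scope.

Lemma Z2_cases (x : 'Z_2) : x = 0 \/ x = 1.
Proof. case: x => [[|[|k]] Hk]; [left; exact: val_inj | right; exact: val_inj | by []]. Qed.
Lemma Z2_add_self (x : 'Z_2) : x + x = 0.
Proof. by case: (Z2_cases x) => ->; apply: val_inj. Qed.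
Lemma Z2_opp (x : 'Z_2) : - x = x.
Proof. by case: (Z2_cases x) => ->; apply: val_inj. Qed.

Definition fc (D : diagram) (d : dart D) : {set dart D} := [set e | fconnect (@fphi D) d e].
Definition vx (D : diagram) (d : dart D) : {set dart D} := [set e | fconnect (@vrotf D) d e].

Lemma fc_in (D : diagram) (d : dart D) : fc d \in faces D.
Proof. by apply: imset_f. Qed.
Lemma vx_in (D : diagram) (d : dart D) : vx d \in vertices D.
Proof. by apply: imset_f. Qed.

Definition rg (D : diagram) (d : dart D) : region D := exist _ (fc d) (fc_in d).
Definition vv (D : diagram) (d : dart D) : vertex D := exist _ (vx d) (vx_in d).

Lemma fphi_inj (D : diagram) : injective (@fphi D).
Proof. move=> x y; rewrite /fphi => /perm_inj /perm_inj //. Qed.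
Lemma vrotf_inj (D : diagram) : injective (@vrotf D).
Proof. move=> x y; rewrite /vrotf => /perm_inj //. Qed.
Lemma straight_inj (D : diagram) : injective (@straight D).
Proof. move=> x y; rewrite /straight => /perm_inj /perm_inj /perm_inj //. Qed.

Lemma fc_eq (D : diagram) (d e : dart D) : fconnect (@fphi D) d e -> fc d = fc e.
Proof.
move=> H; apply/setP => x; rewrite !inE; apply/idP/idP => Hx.
  by apply: connect_trans Hx; rewrite fconnect_sym //; apply: fphi_inj.
by apply: connect_trans Hx.
Qed.

Lemma rg_eq (D : diagram) (d e : dart D) : fconnect (@fphi D) d e -> rg d = rg e.
Proof. by move=> H; apply: val_inj; rewrite /= (fc_eq H). Qed.

Lemma rgP (D : diagram) (r : region D) : exists d, r = rg d.
Proof.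
case: r => A HA; case/imsetP: (HA) => d _ Hd; exists d; apply: val_inj => /=.
by rewrite Hd.
Qed.
Lemma vvP (D : diagram) (v : vertex D) : exists d, v = vv d.
Proof.
case: v => A HA; case/imsetP: (HA) => d _ Hd; exists d; apply: val_inj => /=.
by rewrite Hd.
Qed.

Lemma rg_sa (D : diagram) (Hinv : forall d : dart D, einv D (einv D d) = d) (d : dart D) :
  rg (vrot D d) = rg (einv D d).
Proof.
apply: esym; apply: rg_eq; apply/connectP; exists [:: vrot D d] => //=.
by rewrite /fphi Hinv eqxx.
Qed.

Lemma mem_rg (D : diagram) (d e : dart D) : (e \in val (rg d)) = fconnect (@fphi D) d e.
Proof. by rewrite /= inE. Qed.

Definition vl (D : diagram) (d : dart D) : seq (dart D) :=
  [:: d; vrot D d; vrot D (vrot D d); vrot D (vrot D (vrot D d))].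

Lemma vx_mem (D : diagram) (Hord : forall d : dart D, fingraph.order (@vrotf D) d = 4%N)
  (d e : dart D) : (e \in vx d) = (e \in vl d).
Proof. by rewrite /vx inE fconnect_orbit /fingraph.orbit Hord. Qed.

Lemma vl_uniq (D : diagram) (Hord : forall d : dart D, fingraph.order (@vrotf D) d = 4%N)
  (d : dart D) : uniq (vl d).
Proof. by have := orbit_uniq (@vrotf D) d; rewrite /fingraph.orbit Hord. Qed.

Lemma incident_vv (D : diagram) (Hord : forall d : dart D, fingraph.order (@vrotf D) d = 4%N)
  (d : dart D) (r : region D) : incident (vv d) r = (r \in map (@rg D) (vl d)).
Proof.
apply/existsP/mapP.
  case=> e /andP[He Hr]; exists e; first by rewrite -(vx_mem Hord).
  case: (rgP r) Hr => x -> Hr; apply: rg_eq; by rewrite mem_rg in Hr.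
case=> e He ->; exists e; rewrite /= -/(vx d) (vx_mem Hord) He /= inE; exact: connect0.
Qed.

Lemma vl_rg_uniq (D : diagram) (Hord : forall d : dart D, fingraph.order (@vrotf D) d = 4%N)
  (Hred : reduced D) (d : dart D) : uniq (map (@rg D) (vl d)).
Proof.
rewrite map_inj_in_uniq ?vl_uniq // => x y Hx Hy Hxy.
apply: (Hred (vv d)); rewrite /= -/(vx d) ?(vx_mem Hord) //.
have := congr1 val Hxy => /= Hf.
have : y \in fc y by rewrite inE; exact: connect0.
by rewrite -Hf inE.
Qed.

Lemma game_vv (D : diagram) (Hord : forall d : dart D, fingraph.order (@vrotf D) d = 4%N)
  (Hred : reduced D) (p : {ffun region D -> 'Z_2}) (d : dart D) :
  game_apply p (vv d) = p (rg d) + p (rg (vrot D d)) + p (rg (vrot D (vrot D d)))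
                         + p (rg (vrot D (vrot D (vrot D d)))).
Proof.
rewrite ffunE.
rewrite (eq_bigr (fun r => if incident (vv d) r then p r else 0)); last first.
  by move=> r _; case: ifP; rewrite ?mul1r ?mul0r.
rewrite -big_mkcond /= (eq_bigl (fun r => r \in map (@rg D) (vl d))); last first.
  by move=> r; rewrite incident_vv.
rewrite -big_uniq ?vl_rg_uniq //.
by rewrite /vl /= !big_cons big_nil addr0 !addrA.
Qed.

Lemma s4 (D : diagram) (Hord : forall d : dart D, fingraph.order (@vrotf D) d = 4%N) (d : dart D) :
  vrot D (vrot D (vrot D (vrot D d))) = d.
Proof. by have := iter_order (@vrotf_inj D) d; rewrite Hord. Qed.

Lemma s2_neq (D : diagram) (Hord : forall d : dart D, fingraph.order (@vrotf D) d = 4%N) (d : dart D) :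
  vrot D (vrot D d) != d.
Proof. have := vl_uniq Hord d; rewrite /vl /= !inE. case/and4P => /norP[_ /norP[H _]] _ _ _; by rewrite eq_sym. Qed.

Lemma st_key (D : diagram) (Hinv : forall d : dart D, einv D (einv D d) = d)
  (Hord : forall d : dart D, fingraph.order (@vrotf D) d = 4%N) (x : dart D) :
  straight (einv D (straight x)) = einv D x.
Proof. by rewrite /straight Hinv s4. Qed.

Lemma iter_inj_st (D : diagram) k : injective (iter k (@straight D)).
Proof.
elim: k => [|k IH] x y //=.
by move/straight_inj; apply: IH.
Qed.

Lemma no_rev (D : diagram) (Hinv : forall d : dart D, einv D (einv D d) = d /\ einv D d != d)
  (Hord : forall d : dart D, fingraph.order (@vrotf D) d = 4%N) (d : dart D) :
  ~~ fconnect (@straight D) d (einv D d).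
Proof.
have Hi : forall d : dart D, einv D (einv D d) = d by move=> x; case: (Hinv x).
apply/negP => /iter_findex; set j := findex _ _ _ => Hj.
have key : forall k, iter k (@straight D) (einv D (iter k (@straight D) d)) = einv D d.
  elim=> [|k IH] //. by rewrite iterSr iterS (st_key Hi Hord).
have [k Ek] : exists k, j = (k + k)%N \/ j = (k + k).+1.
  have E := odd_double_half j; exists j./2; rewrite addnn.
  move: E; case: (odd j) => /= E; [right|left]; apply/esym.
    by rewrite -add1n.
  by rewrite add0n in E.
move: Hj (key k); set z := iter k _ d.
case: Ek => ->; [rewrite iterD | rewrite -addSn iterD iterSr] => <- H; have Hz := iter_inj_st H.
  by have := (Hinv z).2; rewrite Hz eqxx.
have := s2_neq Hord (einv D z); rewrite {2}Hz /straight.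
by rewrite /straight in Hz; rewrite -Hz eqxx.
Qed.


Lemma strand_cover (D : diagram) (Hinv : forall d : dart D, einv D (einv D d) = d /\ einv D d != d)
  (Hord : forall d : dart D, fingraph.order (@vrotf D) d = 4%N) (Hstr : #|strands D| = 2%N)
  (d0 e : dart D) : fconnect (@straight D) d0 e || fconnect (@straight D) (einv D d0) e.
Proof.
pose st (d : dart D) := [set x | fconnect (@straight D) d x].
have stin : forall d, st d \in strands D by move=> d; apply: imset_f.
have Hne : st d0 != st (einv D d0).
  apply/negP => /eqP H.
  have : einv D d0 \in st (einv D d0) by rewrite inE; exact: connect0.
  by rewrite -H inE (negbTE (no_rev Hinv Hord d0)).
have Heq : [set st d0; st (einv D d0)] = strands D.
  apply/eqP; rewrite eqEcard; apply/andP; split.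
    by apply/subsetP => x; rewrite !inE => /orP[]/eqP ->.
  by rewrite cards2 Hne Hstr.
have : st e \in strands D by [].
have He : e \in st e by rewrite inE; exact: connect0.
rewrite -Heq !inE => /orP[]/eqP H; rewrite H inE in He; by rewrite He ?orbT.
Qed.

Lemma connect_const (T : finType) (R : Type) (e : rel T) (f : T -> R) :
  (forall x y, e x y -> f y = f x) -> forall x y, connect e x y -> f y = f x.
Proof.
move=> H x y /connectP[p Hp ->]; elim: p x Hp => [|z p IH] x //= /andP[Hxz Hp].
by rewrite IH // (H _ _ Hxz).
Qed.

Definition ash (D : diagram) (sh : {set region D}) : {ffun region D -> 'Z_2} :=
  [ffun r => if r \in sh then 1 else 0].
Definition bsh (D : diagram) (sh : {set region D}) : {ffun region D -> 'Z_2} :=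
  [ffun r => if r \in sh then 0 else 1].

Lemma rg_in (D : diagram) (d : dart D) : d \in val (rg d).
Proof. by rewrite mem_rg; exact: connect0. Qed.

Lemma sh_flip (D : diagram) (sh : {set region D}) (Hsh : checkerboard sh) (x : dart D) :
  (rg (einv D x) \in sh) = ~~ (rg x \in sh).
Proof.
have := Hsh (rg x) (rg (einv D x)) (ex_intro2 _ _ x (rg_in x) (rg_in (einv D x))).
by case: (_ \in sh); case: (_ \in sh).
Qed.

Lemma Z2_s0 (A B : 'Z_2) : A + B = 0 -> B = A.
Proof.
move/eqP => H; apply/eqP; move: H.
by case: (Z2_cases A) => ->; case: (Z2_cases B) => ->.
Qed.
Lemma Z2_s1 (A B : 'Z_2) : A + B = 1 -> B = A + 1.
Proof.
move/eqP => H; apply/eqP; move: H.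
by case: (Z2_cases A) => ->; case: (Z2_cases B) => ->.
Qed.

Lemma Z2_move (A B C E : 'Z_2) : A + B + C + E = 0 -> C + E = A + B.
Proof.
move/eqP => H; apply/eqP; move: H.
by case: (Z2_cases A) => ->; case: (Z2_cases B) => ->; case: (Z2_cases C) => ->;
  case: (Z2_cases E) => ->.
Qed.

Lemma kernel_char (D : diagram) (HD : knot_diagram D) (Hred : reduced D)
  (sh : {set region D}) (Hsh : checkerboard sh) (p : {ffun region D -> 'Z_2}) :
  game_apply p = 0 ->
  [\/ p = 0, p = [ffun _ => 1], p = ash sh | p = bsh sh].
Proof.
case: HD => Hinv Hord Hconn _ Hstr.
have Hi : forall d : dart D, einv D (einv D d) = d by move=> x; case: (Hinv x).
move=> Hp.
pose P (x : dart D) := p (rg x).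
have Hv : forall x, P x + P (vrot D x) + P (vrot D (vrot D x)) + P (vrot D (vrot D (vrot D x))) = 0.
  by move=> x; rewrite /P -(game_vv Hord Hred) Hp ffunE.
have Hsa : forall x, P (vrot D x) = P (einv D x) by move=> x; rewrite /P rg_sa.
pose q x := P x + P (einv D x).
have Hqs : forall x, q (straight x) = q x.
  move=> x; rewrite /q /straight -Hsa.
  have -> : P x = P (vrot D (einv D x)) by rewrite Hsa Hi.
  by rewrite [P (vrot D _) + P (einv D x)]addrC; apply: Z2_move; apply: Hv.
have Hqa : forall x, q (einv D x) = q x by move=> x; rewrite /q Hi addrC.
case: (pickP (fun _ : dart D => true)) => [d0 _|Hnone]; last first.
  by constructor 1; apply/ffunP => r; case: (rgP r) => x; have := Hnone x.
have Hq : forall e, q e = q d0.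
  have Hst : forall d e, fconnect (@straight D) d e -> q e = q d.
    by move=> d e; apply: connect_const => x y /eqP <-; apply: Hqs.
  move=> e; case/orP: (strand_cover Hinv Hord Hstr d0 e) => /Hst -> //.
have Hcon : forall f : dart D -> 'Z_2, (forall x, f (vrot D x) = f x) ->
    (forall x, f (einv D x) = f x) -> forall e, f e = f d0.
  move=> f H1 H2 e; apply: connect_const (Hconn d0 e) => x y /orP[]/eqP ->; by [].
case: (Z2_cases (q d0)) => Hq0.
  have HPa : forall x, P (einv D x) = P x.
    by move=> x; apply: Z2_s0; rewrite -Hq0 -(Hq x).
  have HP := Hcon P (fun x => etrans (Hsa x) (HPa x)) HPa.
  case: (Z2_cases (P d0)) => H0; [constructor 1 | constructor 2].
    by apply/ffunP => r; case: (rgP r) => x ->; rewrite !ffunE; exact: etrans (HP x) H0.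
  by apply/ffunP => r; case: (rgP r) => x ->; rewrite !ffunE; exact: etrans (HP x) H0.
have HPa : forall x, P (einv D x) = P x + 1.
  by move=> x; apply: Z2_s1; rewrite -Hq0 -(Hq x).
pose Q x := P x + (if rg x \in sh then 1 else 0).
have HQa : forall x, Q (einv D x) = Q x.
  move=> x; rewrite /Q HPa (sh_flip Hsh); case: (rg x \in sh) => /=.
    by rewrite addr0.
  by rewrite -addrA Z2_add_self.
have HQs : forall x, Q (vrot D x) = Q x.
  by move=> x; rewrite -(HQa x) /Q -/(P _) Hsa rg_sa.
have HQ := Hcon Q HQs HQa.
case: (Z2_cases (Q d0)) => H0; [constructor 3 | constructor 4];
  apply/ffunP => r; case: (rgP r) => x ->; rewrite !ffunE;
  have := HQ x; rewrite H0 /Q /P; case: (rg x \in sh);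
  by case: (Z2_cases (p (rg x))) => ->.
Qed.

Lemma game_add (D : diagram) (p q : {ffun region D -> 'Z_2}) :
  game_apply (p + q) = game_apply p + game_apply q.
Proof.
apply/ffunP => v; rewrite !ffunE -big_split /=; apply: eq_bigr => r _.
by rewrite ffunE mulrDr.
Qed.

Lemma ffZ2_opp (T : finType) (p : {ffun T -> 'Z_2}) : - p = p.
Proof. by apply/ffunP => x; rewrite ffunE Z2_opp. Qed.

Lemma ffZ2_self (T : finType) (p : {ffun T -> 'Z_2}) : p + p = 0.
Proof. by apply/ffunP => x; rewrite !ffunE Z2_add_self. Qed.

Lemma game_kelem (D : diagram) (HD : knot_diagram D) (Hred : reduced D)
  (p : {ffun region D -> 'Z_2}) (c : 'Z_2)
  (H : forall x, p (rg (vrot D x)) = p (rg x) + c) : game_apply p = 0.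
Proof.
case: HD => Hinv Hord Hconn _ Hstr.
apply/ffunP => v; case: (vvP v) => d ->; rewrite (game_vv Hord Hred) !H ffunE.
apply/eqP; case: (Z2_cases (p (rg d))) => ->; by case: (Z2_cases c) => ->.
Qed.

Lemma kernel_elems (D : diagram) (HD : knot_diagram D) (Hred : reduced D)
  (sh : {set region D}) (Hsh : checkerboard sh) :
  [/\ game_apply [ffun _ : region D => 1] = 0, game_apply (ash sh) = 0
    & game_apply (bsh sh) = 0].
Proof.
have Hi : forall d : dart D, einv D (einv D d) = d by move=> x; case: HD => H _ _ _ _; case: (H x).
split; first by apply: (game_kelem HD Hred (c := 0)) => x; rewrite !ffunE addr0.
  apply: (game_kelem HD Hred (c := 1)) => x; rewrite !ffunE (rg_sa Hi) (sh_flip Hsh).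
  by case: (rg x \in sh); rewrite /= ?add0r ?Z2_add_self.
apply: (game_kelem HD Hred (c := 1)) => x; rewrite !ffunE (rg_sa Hi) (sh_flip Hsh).
by case: (rg x \in sh); rewrite /= ?add0r ?Z2_add_self.
Qed.

Definition VS (D : diagram) (S : {set region D}) : {set {ffun region D -> 'Z_2}} :=
  [set p : {ffun region D -> 'Z_2} | [forall r in S, p r == 0]].
Definition KS (D : diagram) : {set {ffun region D -> 'Z_2}} :=
  [set p | game_apply p == 0].

Lemma VS_add (D : diagram) (S : {set region D}) (p q : {ffun region D -> 'Z_2}) : p \in VS S -> q \in VS S -> p + q \in VS S.
Proof.
rewrite !inE => /forallP Hp /forallP Hq; apply/forallP => r; apply/implyP => Hr.
by rewrite ffunE (eqP (implyP (Hp r) Hr)) (eqP (implyP (Hq r) Hr)) addr0.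
Qed.

Lemma count_fib (D : diagram) (S : {set region D}) :
  #|VS S| = (#|[set game_apply p | p in VS S]| * #|VS S :&: KS D|)%N.
Proof.
rewrite -sum1_card (partition_big_imset (@game_apply D)) /= -sum_nat_const.
apply: eq_bigr => c /imsetP[p0 Hp0 ->].
rewrite (eq_bigl (fun p => p \in [set p in VS S | game_apply p == game_apply p0])); last first.
  by move=> p; rewrite inE.
rewrite sum1_card.
have -> : [set p in VS S | game_apply p == game_apply p0] =
          [set p0 + k | k in VS S :&: KS D].
  apply/setP => p; rewrite inE; apply/andP/imsetP.
    case=> Hp /eqP Hg; exists (p0 + p).
      rewrite in_setI VS_add // inE game_add Hg ffZ2_self eqxx //.
    by rewrite addrA ffZ2_self add0r.
  case=> k; rewrite in_setI => /andP[Hk]; rewrite inE => /eqP Hgk ->; split.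
    exact: VS_add.
  by rewrite game_add Hgk addr0.
by rewrite card_imset //; apply: addrI.
Qed.

Lemma card_VS (D : diagram) (S : {set region D}) :
  #|VS S| = (2 ^ (#|{: region D}| - #|S|))%N.
Proof.
have -> : #|VS S| = #|pffun_on (0 : 'Z_2) (~: S) predT|.
  apply: eq_card => p; rewrite inE; apply/forallP/pffun_onP.
    move=> H; split; last by move=> x.
    apply/subsetP => r; rewrite !inE; apply: contra => Hr.
    exact: implyP (H r) Hr.
  case=> /subsetP H _ r; apply/implyP => Hr; have := H r; rewrite !inE Hr.
  by case: (p r == 0) => //= /(_ isT).
by rewrite card_pffun_on card_ord cardsCs setCK.
Qed.

Lemma vx_eq (D : diagram) (d e : dart D) : fconnect (@vrotf D) d e -> vx d = vx e.
Proof.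
move=> H; apply/setP => x; rewrite !inE; apply/idP/idP => Hx.
  by apply: connect_trans Hx; rewrite fconnect_sym //; apply: vrotf_inj.
by apply: connect_trans Hx.
Qed.

Lemma card_regions (D : diagram) (HD : knot_diagram D) :
  #|{: region D}| = (#|{: vertex D}| + 2)%N.
Proof.
case: HD => Hinv Hord Hconn Heul Hstr.
rewrite !card_sig.
have -> : #|[pred x | x \in faces D]| = #|faces D| by apply: eq_card.
have -> : #|[pred x | x \in vertices D]| = #|vertices D| by apply: eq_card.
suff Hd : #|dart D| = (4 * #|vertices D|)%N.
  have H4 : ((4 * #|vertices D|)./2 = 2 * #|vertices D|)%N.
    by rewrite -[4%N]/(2 * 2)%N -mulnA mul2n doubleK.
  move: Heul; rewrite Hd H4 => E.
  apply/eqP; rewrite -(eqn_add2l #|vertices D|) E.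
  by rewrite addnA -[(2 * _)%N]/((1 + 1) * _)%N mulnDl mul1n.
have -> : #|dart D| = (\sum_(d in dart D) 1)%N by rewrite sum1_card.
rewrite (partition_big_imset (@vx D)) /= mulnC -sum_nat_const.
apply: eq_bigr => v /imsetP[d0 _ ->].
rewrite (eq_bigl (fun i => i \in vx d0)); last first.
  move=> i; apply/eqP/idP => [<-|Hi]; first by rewrite inE; exact: connect0.
  by apply: esym; apply: vx_eq; rewrite inE in Hi.
rewrite sum1_card -(Hord d0); apply: eq_card => i; by rewrite inE.
Qed.

Lemma game0 (D : diagram) : game_apply (0 : {ffun region D -> 'Z_2}) = 0.
Proof. by apply/ffunP => v; rewrite !ffunE big1 // => r _; rewrite ffunE mulr0. Qed.

Lemma I_eq (D : diagram) (S : {set region D}) :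
  [set c : {ffun vertex D -> 'Z_2} | [exists p, solving c p && [forall r in S, p r == 0]]]
  = [set game_apply p | p in VS S].
Proof.
apply/setP => c; rewrite inE; apply/existsP/imsetP.
  by case=> p /andP[/eqP Hp HS]; exists p; rewrite ?inE // Hp ffZ2_opp.
by case=> p Hp ->; exists p; rewrite inE in Hp; rewrite /solving ffZ2_opp eqxx.
Qed.

Definition one_ff (D : diagram) : {ffun region D -> 'Z_2} := [ffun _ => 1].

Lemma kern_mem (D : diagram) (HD : knot_diagram D) (Hred : reduced D)
  (sh : {set region D}) (Hsh : checkerboard sh) (p : {ffun region D -> 'Z_2}) :
  (p \in KS D) = (p \in [:: 0; one_ff D; ash sh; bsh sh]).
Proof.
case: (kernel_elems HD Hred Hsh) => H1 Ha Hb.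
rewrite inE !in_cons in_nil orbF; apply/eqP/idP.
  by case/(kernel_char HD Hred Hsh) => ->; rewrite eqxx ?orbT.
by case/or4P => /eqP ->; rewrite ?game0.
Qed.

Unset Implicit Arguments.
Set Strict Implicit.

Theorem mainTheorem11 (n : nat) (D : diagram)
  (HD : knot_diagram D) (Hred : reduced D) (Hn : #|{: vertex D}| = n)
  (sh : {set region D}) (Hsh : checkerboard sh) :
  [/\ (* (i) *)
      forall (r1 r2 : region D), r1 \in sh -> r2 \notin sh ->
      forall c : {ffun vertex D -> 'Z_2},
        exists! p : {ffun region D -> 'Z_2},
          solving c p /\ p r1 = 0 /\ p r2 = 0,
      (* (ii) *)
      forall S : {set region D},
        S :&: sh != set0 -> S :\: sh != set0 ->
        #|[set c : {ffun vertex D -> 'Z_2} |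
            [exists p, solving c p && [forall r in S, p r == 0]]]|
          = (2 ^ (n + 2 - #|S|))%N
    & (* (iii) *)
      forall S : {set region D}, (0 < #|S|)%N ->
        (S \subset sh \/ S \subset ~: sh) ->
        #|[set c : {ffun vertex D -> 'Z_2} |
            [exists p, solving c p && [forall r in S, p r == 0]]]|
          = (2 ^ (n + 1 - #|S|))%N].
Proof.
have Hm : #|{: region D}| = (n + 2)%N by rewrite (card_regions HD) Hn.
have HK := kern_mem HD Hred Hsh.
have [H1 Ha Hb] := kernel_elems HD Hred Hsh.
have both : forall r : region D, exists r1 r2, r1 \in sh /\ r2 \notin sh.
  move=> r; case: (rgP r) => x _; have := sh_flip Hsh x.
  case E: (rg x \in sh) => /= E2.
    by exists (rg x), (rg (einv D x)); rewrite E2.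
  by exists (rg (einv D x)), (rg x); rewrite E E2.
have Hsurj : forall c : {ffun vertex D -> 'Z_2}, exists p, game_apply p = c.
  have Hc := count_fib (set0 : {set region D}).
  rewrite card_VS cards0 subn0 Hm in Hc.
  have HKle : (#|VS (set0 : {set region D}) :&: KS D| <= 4)%N.
    apply: leq_trans (card_size [:: 0; one_ff D; ash sh; bsh sh]).
    by apply: subset_leq_card; apply/subsetP => p; rewrite in_setI HK => /andP[_ ->].
  have Hle : (#|[set game_apply p | p in VS (set0 : {set region D})]| <= 2 ^ n)%N.
    by have := max_card (mem [set game_apply p | p in VS (set0 : {set region D})]); rewrite card_ffun card_ord Hn.
  have Heq : #|[set game_apply p | p in VS (set0 : {set region D})]| = (2 ^ n)%N.
    apply/eqP; rewrite eqn_leq Hle /= -(@leq_pmul2r 4) //.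
    have -> : (2 ^ n * 4 = 2 ^ (n + 2))%N by rewrite expnD.
    by rewrite Hc; apply: leq_mul.
  have Hset : [set game_apply p | p in VS (set0 : {set region D})] = setT.
    by apply/eqP; rewrite eqEcard subsetT cardsT card_ffun card_ord Hn Heq leqnn.
  move=> c; have : c \in [set game_apply p | p in VS (set0 : {set region D})] by rewrite Hset inE.
  by case/imsetP => p _ ->; exists p.
have Gif : forall (b : bool) (q : {ffun region D -> 'Z_2}), game_apply q = 0 ->
    game_apply (if b then q else 0) = 0 by case=> q // _; rewrite game0.
split.
- move=> r1 r2 Hr1 Hr2 c; case: (Hsurj c) => p Hp.
  pose p' := p + (if p r1 == 1 then ash sh else 0) + (if p r2 == 1 then bsh sh else 0).
  have Hp' : game_apply p' = c by rewrite !game_add Hp !Gif // !addr0.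
  have E1 : p' r1 = 0.
    rewrite !ffunE !(fun_if (fun f : {ffun region D -> 'Z_2} => f r1)) !ffunE Hr1 /=.
    rewrite if_same addr0; case: eqP => [->|]; first exact: Z2_add_self.
    by case: (Z2_cases (p r1)) => -> // _; rewrite addr0.
  have E2 : p' r2 = 0.
    rewrite !ffunE !(fun_if (fun f : {ffun region D -> 'Z_2} => f r2)) !ffunE (negbTE Hr2) /=.
    rewrite if_same addr0; case: eqP => [->|]; first exact: Z2_add_self.
    by case: (Z2_cases (p r2)) => -> // _; rewrite addr0.
  exists p'; split; first by rewrite /solving Hp' ffZ2_opp eqxx.
  move=> q [/eqP Hq [Hq1 Hq2]].
  have : p' + q \in KS D by rewrite inE game_add Hq Hp' ffZ2_opp ffZ2_self.
  rewrite HK !in_cons in_nil orbF; case/or4P => /eqP E.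
  + by rewrite -[q]add0r -(ffZ2_self p') -addrA E addr0.
  + by have := congr1 (fun f : {ffun region D -> 'Z_2} => f r1) E; rewrite ffunE E1 Hq1 addr0 !ffunE.
  + by have := congr1 (fun f : {ffun region D -> 'Z_2} => f r1) E; rewrite ffunE E1 Hq1 addr0 !ffunE Hr1.
  + by have := congr1 (fun f : {ffun region D -> 'Z_2} => f r2) E; rewrite ffunE E2 Hq2 addr0 !ffunE (negbTE Hr2).
- move=> S /set0Pn [r Hr] /set0Pn [r' Hr'].
  rewrite in_setI in Hr; case/andP: Hr => HrS Hrsh.
  rewrite in_setD in Hr'; case/andP: Hr' => Hr'sh Hr'S.
  rewrite I_eq; have Hc := count_fib S; rewrite card_VS Hm in Hc.
  have HE : VS S :&: KS D = [set (0 : {ffun region D -> 'Z_2})].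
    apply/setP => p; rewrite in_setI HK !inE; apply/andP/eqP.
      case=> /forallP HS; case/or4P => /eqP Ep //; rewrite Ep in HS.
      + by have := HS r; rewrite HrS /one_ff ffunE.
      + by have := HS r; rewrite HrS /ash ffunE Hrsh.
      + by have := HS r'; rewrite Hr'S /bsh ffunE (negbTE Hr'sh).
    move=> ->; split; last by rewrite eqxx.
    by apply/forallP => x; rewrite ffunE eqxx implybT.
  by rewrite HE cards1 muln1 in Hc.
- move=> S HS0 Hsub.
  have [r HrS] : exists r, r \in S by apply/set0Pn; rewrite -card_gt0.
  rewrite I_eq; have Hc := count_fib S; rewrite card_VS Hm in Hc.
  have gen : forall (z : {ffun region D -> 'Z_2}) (r' : region D), r' \notin S ->
      z != 0 -> VS S :&: KS D = [set (0 : {ffun region D -> 'Z_2}); z] ->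
      #|[set game_apply p | p in VS S]| = (2 ^ (n + 1 - #|S|))%N.
    move=> z r' Hr' Hz HE; rewrite HE cards2 eq_sym Hz in Hc.
    have HSle : (#|S| < n + 2)%N.
      rewrite -Hm; apply: (@leq_trans #|[set~ r']|.+1); last by rewrite cardsC1 prednK //; apply/card_gt0P; exists r'.
      rewrite ltnS; apply: subset_leq_card; apply/subsetP => x Hx; rewrite !inE.
      by apply/eqP => E; rewrite -E Hx in Hr'.
    have E : (n + 2 - #|S| = (n + 1 - #|S|).+1)%N by lia.
    rewrite E in Hc.
    by apply/eqP; rewrite -(@eqn_pmul2r 2) // -expnSr Hc.
  case: (rgP r) HrS => x -> HrS.
  have Hf := sh_flip Hsh x.
  have HS : forall p : {ffun region D -> 'Z_2}, [forall r in S, p r == 0] -> p (rg x) = 0.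
    by move=> p => /forallP/(_ (rg x)); rewrite HrS => /eqP.
  case: Hsub => /subsetP Hsub.
  + have Hxs : rg x \in sh by apply: Hsub.
    have Hr' : rg (einv D x) \notin S.
      by apply/negP => /Hsub; rewrite Hf Hxs.
    apply: (gen (bsh sh) _ Hr').
      by apply/negP => /eqP/(congr1 (fun f : {ffun region D -> 'Z_2} => f (rg (einv D x))));
        rewrite !ffunE Hf Hxs.
    apply/setP => p; rewrite in_setI HK !inE; apply/andP/orP.
      case=> Hp; case/or4P => /eqP Ep; [by left; rewrite Ep | | | by right; rewrite Ep].
      + by have := HS p Hp; rewrite Ep /one_ff ffunE.
      + by have := HS p Hp; rewrite Ep /ash ffunE Hxs.
    case=> /eqP ->; rewrite eqxx ?orbT; split => //.
      by apply/forallP => y; rewrite ffunE eqxx implybT.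
    apply/forallP => y; apply/implyP => /Hsub Hy; by rewrite ffunE Hy.
  + have Hxs : rg x \notin sh by have := Hsub _ HrS; rewrite inE.
    have Hr' : rg (einv D x) \notin S.
      by apply/negP => /Hsub; rewrite inE Hf Hxs.
    apply: (gen (ash sh) _ Hr').
      by apply/negP => /eqP/(congr1 (fun f : {ffun region D -> 'Z_2} => f (rg (einv D x))));
        rewrite !ffunE Hf Hxs.
    apply/setP => p; rewrite in_setI HK !inE; apply/andP/orP.
      case=> Hp; case/or4P => /eqP Ep; [by left; rewrite Ep | | by right; rewrite Ep | ].
      + by have := HS p Hp; rewrite Ep /one_ff ffunE.
      + by have := HS p Hp; rewrite Ep /bsh ffunE (negbTE Hxs).
    case=> /eqP ->; rewrite eqxx ?orbT; split => //.
      by apply/forallP => y; rewrite ffunE eqxx implybT.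
    apply/forallP => y; apply/implyP => /Hsub Hy; rewrite inE in Hy; by rewrite ffunE (negbTE Hy).
Qed.
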